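(* Let $\mu_m$ be the distribution on $\{0,1\}^m\times\{0,1\}^m$ under which each of the $2m$ bits is independently equal to 1 with probability $\sqrt{1/2}$ and to 0 with probability $1-\sqrt{1/2}$. Then $disc_{\mu_m}(IP_m)\le O(2^{-m/4})$.
   Context: $IP_m(x,y)=\bigoplus_{i=1}^m(x_i\wedge y_i)$. For a distribution $\mu$ on $\{0,1\}^m\times\{0,1\}^m$ and $f$ with range $\{0,1\}$, $disc_\mu(f)=\max_R|\mu(R\cap f^{-1}(0))-\mu(R\cap f^{-1}(1))|$, where $R$ ranges over rectangles $A\times B$ with $A,B\subseteq\{0,1\}^m$. *)

(* Defs.v *)
From HB Require Import structures.
From mathcomp Require Import all_boot all_order all_algebra.
From mathcomp Require Import reals.
Set Implicit Arguments. Unset Strict Implicit. Unset Printing Implicit Defensive.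
Import Order.TTheory GRing.Theory Num.Theory.
Local Open Scope ring_scope.

Definition bits (m : nat) := {ffun 'I_m -> bool}.

Definition IP (m : nat) (x y : bits m) : bool :=
  \big[addb/false]_(i < m) (x i && y i).

Definition rect_mass (R : realType) (m : nat) (mu : bits m -> bits m -> R)
  (f : bits m -> bits m -> bool) (A B : {set bits m}) (b : bool) : R :=
  \sum_(x in A) \sum_(y in B | f x y == b) mu x y.

Definition disc (R : realType) (m : nat) (mu : bits m -> bits m -> R)
  (f : bits m -> bits m -> bool) : R :=
  \big[Num.max/0]_(A : {set bits m}) \big[Num.max/0]_(B : {set bits m})
    `|rect_mass mu f A B false - rect_mass mu f A B true|.

Definition pbit (R : realType) (b : bool) : R :=
  if b then Num.sqrt (2^-1) else 1 - Num.sqrt (2^-1).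

Definition mu_m (R : realType) (m : nat) (x y : bits m) : R :=
  (\prod_(i < m) pbit R (x i)) * (\prod_(i < m) pbit R (y i)).

(* Main.v *)
Require Import Defs.
From HB Require Import structures.
From mathcomp Require Import all_boot all_order all_algebra.
From mathcomp Require Import reals.
From mathcomp Require Import ring lra.
Import Order.TTheory GRing.Theory Num.Theory.
Local Open Scope ring_scope.

Section Proof.
Variable R : realType.

Definition sg (b : bool) : R := (-1) ^+ b.

Lemma sgIP m (x y : bits m) : sg (IP x y) = \prod_(i < m) sg (x i && y i).
Proof.
rewrite /IP /sg.
apply: (big_morph (fun b : bool => (-1) ^+ b : R)) => //.
by move=> a b; rewrite signr_addb.
Qed.

Lemma orth m (y y' : bits m) :
  \sum_(x : bits m) sg (IP x y) * sg (IP x y') = if y == y' then 2 ^+ m else 0.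
Proof.
under eq_bigr => x _ do rewrite !sgIP -big_split /=.
rewrite -(bigA_distr_bigA (fun (i : 'I_m) (b : bool) => sg (b && y i) * sg (b && y' i))) /=.
under eq_bigr => i _ do rewrite big_bool /=.
case: eqP => [<-|/eqP neq].
  rewrite (eq_bigr (fun _ => 2)); last first.
    by move=> i _; case: (y i); rewrite /sg /= ?expr0 ?expr1; ring.
  by rewrite prodr_const card_ord.
have [i Hi] : exists i, y i != y' i.
  apply/existsP; apply: contraR neq => /existsPn H.
  by apply/eqP/ffunP => i; apply/eqP; move: (H i); rewrite negbK.
rewrite (bigD1 i) //=.
suff -> : sg (y i) * sg (y' i) + sg false * sg false = 0 by rewrite mul0r.
by move: Hi; case: (y i); case: (y' i); rewrite /sg /= ?expr0 ?expr1 // => _; ring.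
Qed.

Lemma sumsq m (v : bits m -> R) :
  \sum_(x : bits m) (\sum_(y : bits m) v y * sg (IP x y)) ^+ 2
  = 2 ^+ m * \sum_(y : bits m) v y ^+ 2.
Proof.
under eq_bigr => x _ do rewrite expr2 mulr_suml.
under eq_bigr => x _ do under eq_bigr => y _ do rewrite mulr_sumr.
rewrite exchange_big /=.
under eq_bigr => y _ do rewrite exchange_big /=.
rewrite mulr_sumr; apply: eq_bigr => y _.
under eq_bigr => y' _.
  rewrite (eq_bigr (fun x => v y * v y' * (sg (IP x y) * sg (IP x y')))); last first.
    by move=> x _; ring.
  rewrite -mulr_sumr orth.
  over.
rewrite /=.
rewrite (eq_bigr (fun y' => if y' == y then v y * v y' * 2 ^+ m else 0)); last first.
  by move=> y' _; rewrite eq_sym; case: eqP => _; rewrite ?mulr0.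
rewrite -big_mkcond big_pred1_eq; ring.
Qed.

Lemma lindsey m (u v : bits m -> R) (lam : R) : 0 < lam -> lam ^+ 2 = 2 ^+ m ->
  2 * `|\sum_(x : bits m) \sum_(y : bits m) u x * v y * sg (IP x y)|
  <= lam * \sum_(x : bits m) u x ^+ 2 + lam * \sum_(y : bits m) v y ^+ 2.
Proof.
move=> lam0 lam2.
set g := fun x => \sum_(y : bits m) v y * sg (IP x y).
have -> : \sum_(x : bits m) \sum_(y : bits m) u x * v y * sg (IP x y)
        = \sum_(x : bits m) u x * g x.
  apply: eq_bigr => x _; rewrite /g mulr_sumr; apply: eq_bigr => y _; ring.
have Hg : \sum_(x : bits m) g x ^+ 2 = lam ^+ 2 * \sum_(y : bits m) v y ^+ 2.
  by rewrite lam2 /g sumsq.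
have key : forall x, 2 * `|u x * g x| <= lam * u x ^+ 2 + lam^-1 * g x ^+ 2.
  move=> x; rewrite normrM.
  have lamV : lam * lam^-1 = 1 by rewrite mulfV // gt_eqF.
  have h : 0 <= (lam * `|u x| - `|g x|) ^+ 2 by apply: sqr_ge0.
  have h2 : 2 * (`|u x| * `|g x|) * lam <= (lam * u x ^+ 2 + lam^-1 * g x ^+ 2) * lam.
    rewrite -[u x ^+ 2]real_normK ?num_real // -[g x ^+ 2]real_normK ?num_real //.
    have e : (lam * `|u x| ^+ 2 + lam^-1 * `|g x| ^+ 2) * lam
       = (lam * `|u x|) ^+ 2 + `|g x| ^+ 2 * (lam * lam^-1) by ring.
    rewrite e lamV mulr1; nra.
  by rewrite -(ler_pM2r lam0).
apply: (le_trans (y := 2 * \sum_(x : bits m) `|u x * g x|)).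
  by rewrite ler_pM2l // ler_norm_sum.
apply: (le_trans (y := \sum_(x : bits m) (lam * u x ^+ 2 + lam^-1 * g x ^+ 2))).
  rewrite mulr_sumr; apply: ler_sum => x _; exact: key.
rewrite big_split /= -!mulr_sumr Hg mulrA.
have -> : lam^-1 * lam ^+ 2 = lam by rewrite expr2 mulrA mulVf ?mul1r // gt_eqF.
by [].
Qed.

Definition alpha m (x : bits m) : R := \prod_(i < m) pbit R (x i).
Arguments alpha {m}.

Lemma alpha_ge0 m (x : bits m) : 0 <= alpha x.
Proof.
apply: prodr_ge0 => i _; rewrite /pbit; case: (x i); first exact: sqrtr_ge0.
set s := Num.sqrt (2^-1 : R).
have s0 : 0 <= s by exact: sqrtr_ge0.
have s2 : s ^+ 2 = 2^-1 by rewrite sqr_sqrtr // invr_ge0.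
rewrite subr_ge0; nra.
Qed.

Lemma alpha_sq m :
  \sum_(x : bits m) alpha x ^+ 2 = (pbit R true ^+ 2 + pbit R false ^+ 2) ^+ m.
Proof.
rewrite /alpha.
under eq_bigr => x _ do rewrite -prodrXl.
rewrite -(bigA_distr_bigA (fun (i : 'I_m) (b : bool) => pbit R b ^+ 2)) /=.
under eq_bigr => i _ do rewrite big_bool /=.
by rewrite prodr_const card_ord.
Qed.

Lemma diff_eq m (A B : {set bits m}) :
  rect_mass (@mu_m R m) (@IP m) A B false - rect_mass (@mu_m R m) (@IP m) A B true
  = \sum_(x : bits m) \sum_(y : bits m)
      (if x \in A then alpha x else 0) * (if y \in B then alpha y else 0) * sg (IP x y).
Proof.
rewrite /rect_mass -sumrB big_mkcond /=; apply: eq_bigr => x _.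
case: (x \in A); last by rewrite big1 // => y _; rewrite !mul0r.
rewrite big_mkcond (big_mkcond (fun y => (y \in B) && (IP x y == true))) -sumrB /=; apply: eq_bigr => y _.
rewrite /mu_m /sg.
case: (y \in B); case: (IP x y); rewrite /= ?expr0 ?expr1 ?mulr0 ?mulr1 ?mulrN1 ?subr0 ?sub0r ?oppr0 //.
Qed.

End Proof.
Arguments alpha {R m}.

Theorem lemma6p2 (R : realType) :
  exists C : R, forall m : nat,
    disc (@mu_m R m) (@IP m) <= C * (Num.sqrt (Num.sqrt (2 : R))) ^- m.
Proof.
exists 1 => m.
set s := Num.sqrt (2^-1 : R).
have s0 : 0 <= s by exact: sqrtr_ge0.
have s2 : s ^+ 2 = 2^-1 by rewrite sqr_sqrtr // invr_ge0.
set t := pbit R true ^+ 2 + pbit R false ^+ 2.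
have te : t = 2 - 2 * s by rewrite /t /pbit -/s; rewrite !expr2 in s2 *; nra.
set lam := (2 * s) ^+ m.
have spos : 0 < s by have := s2; rewrite expr2 => h; nra.
have lam0 : 0 < lam by apply: exprn_gt0; rewrite mulr_gt0.
have s22 : (2 * s) ^+ 2 = 2 by rewrite exprMn s2; field.
have lam2 : lam ^+ 2 = 2 ^+ m by rewrite /lam -exprM mulnC exprM s22.
set q := Num.sqrt (Num.sqrt (2 : R)).
have q0 : 0 <= q by exact: sqrtr_ge0.
have q2 : q ^+ 2 = Num.sqrt 2 by rewrite sqr_sqrtr // sqrtr_ge0.
have r2 : Num.sqrt (2 : R) ^+ 2 = 2 by rewrite sqr_sqrtr.
have r0 : 0 <= Num.sqrt (2 : R) by exact: sqrtr_ge0.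
set X := 2 * s * t.
have X0 : 0 <= X by rewrite /X te; rewrite !expr2 in s2; nra.
have XM : forall A B : {set bits m},
  `|rect_mass (@mu_m R m) (@IP m) A B false - rect_mass (@mu_m R m) (@IP m) A B true| <= X ^+ m.
  move=> A B; rewrite diff_eq.
  have := @lindsey R m (fun x => if x \in A then alpha x else 0) (fun y => if y \in B then alpha y else 0) lam lam0 lam2.
  have hu : forall C : {set bits m}, \sum_(x : bits m) (if x \in C then alpha x else 0) ^+ 2 <= t ^+ m.
    move=> C; rewrite /t -alpha_sq; apply: ler_sum => x _; case: (x \in C) => //.
    by rewrite expr2 mul0r exprn_ge0 // alpha_ge0.
  move=> H.
  have H2 : lam * \sum_(x : bits m) (if x \in A then alpha x else 0) ^+ 2
     + lam * \sum_(y : bits m) (if y \in B then alpha y else 0) ^+ 2 <= 2 * X ^+ m.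
    rewrite /X exprMn -/lam.
    have := hu A; have := hu B; move: (ltW lam0) => l0 ha hb.
    have := ler_wpM2l l0 ha; have := ler_wpM2l l0 hb; lra.
  have := le_trans H H2; lra.
have fin : X ^+ m <= 1 * q ^- m.
  rewrite mul1r -div1r ler_pdivlMr ?exprn_gt0 //; last first.
    rewrite lt_def q0 andbT; apply/eqP => h; move: q2; rewrite h expr2 mul0r => /eqP.
    by rewrite eq_sym sqrtr_eq0 leNgt ltr0n.
  rewrite -exprMn; apply: exprn_ile1; first exact: mulr_ge0.
  (* (X q)^4 = 2 X^4 <= 1 *)
  have Xe : X = 4 * s - 2 by rewrite /X te; rewrite !expr2 in s2; nra.
  have s_lb : 543 / 768 <= s.
    rewrite ler_pdivrMr //; rewrite !expr2 in s2; nra.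
  have Y0 : 0 <= X * q by exact: mulr_ge0.
  have x2 : X ^+ 2 = 12 - 16 * s by rewrite Xe; rewrite !expr2 in s2 *; nra.
  have x4 : (X ^+ 2) ^+ 2 = 272 - 384 * s by rewrite x2; rewrite !expr2 in s2 *; nra.
  have Y4 : ((X * q) ^+ 2) ^+ 2 <= 1.
    have -> : ((X * q) ^+ 2) ^+ 2 = (X ^+ 2) ^+ 2 * (q ^+ 2) ^+ 2 by ring.
    rewrite x4 q2 r2; lra.
  rewrite leNgt; apply/negP => Y1.
  have : 1 < ((X * q) ^+ 2) ^+ 2.
    rewrite -exprM; apply: exprn_egt1 => //.
  by rewrite ltNge Y4.
rewrite /disc; elim/big_ind: _ => //.
- by rewrite mul1r invr_ge0 exprn_ge0.
- by move=> x y hx hy; rewrite ge_max hx hy.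
move=> A _; elim/big_ind: _ => //.
- by rewrite mul1r invr_ge0 exprn_ge0.
- by move=> x y hx hy; rewrite ge_max hx hy.
by move=> B _; apply: le_trans (XM A B) fin.
Qed.
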